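(* Let $m,n\in\mathbb{N}$ with $m\ge 1$. If $m$ and $n$ are both even, $m\mid 3n$, and $4\nmid n$, then the friendship graph $F_n$ is not $\mathbb{Z}_m$-cordial.
   Context: Graphs are finite, simple and undirected. For $n\in\mathbb{N}$, the friendship graph $F_n$ is the union of $n$ copies of the triangle $C_3$ joined at a single common (central) vertex. For an abelian group $A$ and a graph $G=(V,E)$, a vertex labeling $\ell:V\to A$ induces an edge labeling $\ell(\{v_1,v_2\})=\ell(v_1)+\ell(v_2)$. Let $f_V(a)=|\{v\in V:\ell(v)=a\}|$ and $f_E(a)=|\{e\in E:\ell(e)=a\}|$. The labeling is $A$-cordial if $|f_V(a_1)-f_V(a_2)|\le 1$ and $|f_E(a_1)-f_E(a_2)|\le 1$ for all $a_1,a_2\in A$; $G$ is $A$-cordial if it admits an $A$-cordial labeling. *)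

(* Defs.v *)
From mathcomp Require Import all_boot all_order.
Set Implicit Arguments. Unset Strict Implicit. Unset Printing Implicit Defensive.

(* A finite simple graph on vertex set 'I_N given by a symmetric irreflexive
   relation; each edge {u,v} is counted once as the pair (u,v) with u < v. *)
Definition simple_graph N (adj : rel 'I_N) : Prop :=
  irreflexive adj /\ symmetric adj.

(* The abelian group Z_m is represented by residues 'I_m with addition mod m.
   A vertex labeling is l : 'I_N -> 'I_m. *)
Definition fV N m (l : 'I_N -> 'I_m) (a : 'I_m) : nat :=
  #|[set v : 'I_N | l v == a]|.

Definition fE N m (adj : rel 'I_N) (l : 'I_N -> 'I_m) (a : 'I_m) : nat :=
  #|[set p : 'I_N * 'I_N | [&& adj p.1 p.2, (p.1 < p.2)%N &
                             ((l p.1 + l p.2) %% m == a)%N]]|.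

Definition Zm_cordial_labeling N m (adj : rel 'I_N) (l : 'I_N -> 'I_m) : Prop :=
  (forall a1 a2 : 'I_m, (fV l a1 <= (fV l a2).+1)%N) /\
  (forall a1 a2 : 'I_m, (fE adj l a1 <= (fE adj l a2).+1)%N).

Definition Zm_cordial (N m : nat) (adj : rel 'I_N) : Prop :=
  exists l : 'I_N -> 'I_m, Zm_cordial_labeling adj l.

(* Friendship graph F_n on vertices 0..2n: vertex 0 is the centre and, for
   i < n, the triangle i is {0, 2i+1, 2i+2}. *)
Definition friendship_adj n : rel 'I_(2 * n + 1) :=
  fun u v =>
    (u != v) &&
    [|| (u == 0 :> nat) && (v != 0 :> nat),
        (v == 0 :> nat) && (u != 0 :> nat)
      | (u != 0 :> nat) && (v != 0 :> nat) && ((u.-1)./2 == (v.-1)./2)].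
Arguments Zm_cordial : clear implicits.
Arguments friendship_adj : clear implicits.

(* Main.v *)
Require Import Defs.
From mathcomp Require Import all_boot all_order.
From mathcomp Require Import zify.
Lemma adjE n (u v : 'I_(2*n+1)) :
  friendship_adj n u v && (u < v) = ((u == 0 :> nat) && (0 < v)) || (odd u && (v == u.+1 :> nat)).
Proof.
have oE : forall k, odd k = (k %% 2 == 1) by move=> k; rewrite modn2; case: odd.
rewrite /friendship_adj -!divn2 oE.
case: u v => [u Hu] [v Hv] /=.
rewrite -(inj_eq val_inj) /=.
lia.
Qed.
Lemma sum_pred1 k w (f : nat -> nat) : \sum_(0 <= v < k) (v == w) * f v = (w < k) * f w.
Proof.
elim: k => [|k IH]; first by rewrite big_geq.
rewrite big_nat_recr //= IH.
case: (eqVneq k w) => [->|H]; first by rewrite ltnSn ltnn.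
by rewrite mul0n addn0 ltnS [w <= k]leq_eqVlt eq_sym (negbTE H).
Qed.
Lemma P1 k (g : nat -> nat) : \sum_(0 <= v < 2*k+1) (0 < v) * g v = \sum_(0 <= i < k) (g (2*i+1) + g (2*i+2)).
Proof.
elim: k => [|k IH]; first by rewrite muln0 add0n big_nat1 big_geq.
rewrite (_ : 2 * k.+1 + 1 = (2*k+1).+1.+1); last lia.
rewrite !big_nat_recr //= IH addn1 ltn0Sn -addnA !mul1n.
congr (_ + (g _ + g _)); lia.
Qed.
Lemma P2 k (f : nat -> nat) : \sum_(0 <= u < 2*k+1) odd u * f u = \sum_(0<=i<k) f (2*i+1).
Proof.
elim: k => [|k IH]; first by rewrite muln0 add0n big_nat1 big_geq.
rewrite (_ : 2 * k.+1 + 1 = (2*k+1).+1.+1); last lia.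
rewrite !big_nat_recr //= IH.
have -> : odd (2*k+1) by rewrite addn1 /= oddM.
by rewrite /= mul1n mul0n addn0.
Qed.
Lemma edge_sum n (h : nat -> nat -> nat) :
  \sum_(p : 'I_(2*n+1) * 'I_(2*n+1) | friendship_adj n p.1 p.2 && (p.1 < p.2)) h p.1 p.2
  = \sum_(0 <= i < n) (h 0 (2*i+1) + h 0 (2*i+2) + h (2*i+1) (2*i+2)).
Proof.
rewrite big_mkcond /= -(pair_big xpredT xpredT (fun u v => if friendship_adj n u v && (u < v) then h u v else 0)) /=.
transitivity (\sum_(0<=u<2*n+1) \sum_(0<=v<2*n+1) ((u==0)*(0<v) + odd u * (v == u.+1)) * h u v).
  rewrite big_mkord; apply: eq_bigr => u _; rewrite big_mkord; apply: eq_bigr => v _.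
  rewrite adjE; case: (eqVneq (u : nat) 0) => [->|Hu] /=.
    by rewrite orbF; case: ifP => _ /=; rewrite ?mul0n ?mul1n ?addn0 ?muln0.
  by case: (odd u) => /=; case: eqP => _ /=; rewrite ?mul0n ?mul1n ?add0n ?muln0.
under eq_bigr do under eq_bigr do rewrite mulnDl.
under eq_bigr do rewrite big_split /=.
rewrite big_split /=.
transitivity (\sum_(0 <= u < 2*n+1) (u == 0) * (\sum_(0 <= v < 2*n+1) (0 < v) * h 0 v)
             + \sum_(0 <= u < 2*n+1) odd u * h u u.+1).
  congr (_ + _).
    apply: eq_bigr => u _; case: (eqVneq u 0) => [->|Hu]; last first.
      by rewrite mul0n big1 // => v _; rewrite mul0n.
    by rewrite mul1n; apply: eq_bigr => v _; rewrite mul1n.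
  rewrite big_nat_cond [RHS]big_nat_cond; apply: eq_bigr => u; rewrite andbT => Hu.
  case Ho: (odd u); last by rewrite big1 // => v _; rewrite mul0n.
  rewrite mul1n.
  under eq_bigr do rewrite mul1n.
  rewrite sum_pred1.
  have -> : u.+1 < 2*n+1 by move: Hu Ho; rewrite /= (_ : odd u = (u %% 2 == 1)); [lia|rewrite modn2; case: odd].
  by rewrite mul1n.
rewrite (sum_pred1 (2*n+1) 0 (fun _ => \sum_(0 <= v < 2*n+1) (0 < v) * h 0 v)) (_ : 0 < 2*n+1); last lia.
rewrite mul1n P1 (P2 n (fun u => h u u.+1)) -big_split /=.
apply: eq_bigr => i _; congr (_ + h _ _); lia.
Qed.
Lemma sum0 m (F : 'I_m -> nat) : \sum_(a < m) F a = 0 -> forall a, F a = 0.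
Proof. move=> /eqP; rewrite sum_nat_eq0 => /forallP H a; exact/eqP/(implyP (H a)). Qed.

Lemma sumK m (f : nat -> nat) x : x < m -> \sum_(a < m) f a * (x == a) = f x.
Proof.
move=> Hx; rewrite (bigD1 (Ordinal Hx)) //= eqxx muln1 big1 ?addn0 // => a Ha.
suff -> : (x == a) = false by rewrite muln0.
apply/negbTE; apply: contra Ha => /eqP Hxa; apply/eqP/val_inj => /=; by rewrite Hxa.
Qed.

Lemma sumK1 m x : x < m -> \sum_(a < m) (x == a : nat) = 1.
Proof. by move=> Hx; rewrite -(@sumK m (fun _ => 1) x Hx); apply: eq_bigr => a _; rewrite mul1n. Qed.

Lemma sum_odd m : \sum_(a < m) odd a = m./2.
Proof.
elim: m => [|m IH]; first by rewrite big_ord0.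
by rewrite big_ord_recr /= IH uphalf_half addnC.
Qed.

Lemma even_sum n (F : nat -> nat) : (forall i, ~~ odd (F i)) -> ~~ odd (\sum_(0<=i<n) F i).
Proof.
move=> H; elim: n => [|n IH]; first by rewrite big_geq.
by rewrite big_nat_recr //= oddD (negbTE IH) (negbTE (H n)).
Qed.

Lemma all_eq m (F : 'I_m -> nat) : 0 < m -> (forall a b, F a <= (F b).+1) ->
  m %| \sum_(a < m) F a -> exists c, forall a, F a = c.
Proof.
move=> m0 HF Hd.
case: (arg_minnP F (isT : xpredT (Ordinal m0))) => a0 _ Hmin.
set c0 := F a0.
have Fd : forall a, F a = c0 + (F a - c0) by move=> a; have := Hmin a isT; lia.
have HD : \sum_(a < m) F a = m * c0 + \sum_(a < m) (F a - c0).
  rewrite {1}(eq_bigr _ (fun a _ => Fd a)) big_split /= sum_nat_const card_ord //.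
set D := \sum_(a < m) (F a - c0) in HD.
have Dle : D <= m.
  rewrite -[leqRHS]card_ord -sum1_card; apply: leq_sum => a _; have := HF a a0; rewrite -/c0; lia.
have DD : m %| D by rewrite -(dvdn_addr _ (dvdn_mulr c0 (dvdnn m))) -HD.
case: (posnP D) => [D0|Dp].
  by exists c0 => a; rewrite Fd (@sum0 _ _ D0 a) addn0.
have Dm : D = m by apply/eqP; rewrite eqn_leq Dle (dvdn_leq Dp DD).
exists c0.+1 => a.
have : \sum_(a < m) (1 - (F a - c0)) = 0.
  have E : \sum_(a < m) ((F a - c0) + (1 - (F a - c0))) = \sum_(a < m) 1.
    by apply: eq_bigr => b _; have := HF b a0; rewrite -/c0; lia.
  rewrite big_split /= -/D Dm sum1_card card_ord in E.
  by move/eqP: E; rewrite -[X in _ == X]addn0 eqn_add2l => /eqP.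
move/sum0/(_ a) => /= H1; have := HF a a0; rewrite -/c0; have := Hmin a isT; lia.
Qed.
Theorem theorem7p1 (m n : nat) :
  (1 <= m)%N -> ~~ odd m -> ~~ odd n -> (m %| 3 * n)%N -> ~~ (4 %| n)%N ->
  ~ Zm_cordial (2 * n + 1) m (friendship_adj n).
Proof.
move=> m1 em en dm n4 [l [_ HE]].
pose g (x : nat) : nat := if (insub x : option 'I_(2*n+1)) is Some u then val (l u) else 0.
have gE : forall u : 'I_(2*n+1), g u = l u by move=> u; rewrite /g valK.
pose lab x y := (g x + g y) %% m.
pose FE a := fE (friendship_adj n) l a.
have FEE : forall a : 'I_m, FE a = \sum_(0 <= i < n) ((lab 0 (2*i+1) == a : nat)
     + (lab 0 (2*i+2) == a : nat) + (lab (2*i+1) (2*i+2) == a : nat)).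
  move=> a; rewrite /FE /fE -(edge_sum n (fun x y => (lab x y == a : nat))).
  rewrite -sum1_card [RHS]big_mkcond [LHS]big_mkcond; apply: eq_bigr => p _.
  rewrite inE /lab !gE andbA; case H: (friendship_adj n p.1 p.2 && (p.1 < p.2)) => /=; last by [].
  by case: ((l p.1 + l p.2) %% m == a).
have labm : forall x y, lab x y < m by move=> x y; rewrite ltn_pmod.
have Hsum : \sum_(a < m) FE a = 3 * n.
  under eq_bigr do rewrite FEE.
  rewrite exchange_big /= (eq_bigr (fun _ => 3)).
    by rewrite sum_nat_const_nat subn0 mulnC.
  move=> i _; rewrite !big_split /=.
  by rewrite !sumK1.
have Hodd : ~~ odd (\sum_(a < m) odd a * FE a).
  under eq_bigr do rewrite FEE big_distrr /=.
  rewrite exchange_big /=.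
  rewrite (eq_bigr (fun i => odd (lab 0 (2*i+1)) + odd (lab 0 (2*i+2)) + odd (lab (2*i+1) (2*i+2)))).
    apply: even_sum => i; rewrite /lab !odd_mod ?(negbTE em) // !oddD.
    by case: (odd (g 0)); case: (odd (g (2*i+1))); case: (odd (g (2*i+2))).
  move=> i _; rewrite -!(@sumK m odd _ (labm _ _)) -!big_split /=; apply: eq_bigr => a _.
  by rewrite !mulnDr.
have [c Hc] : exists c, forall a, FE a = c.
  by apply: (@all_eq m FE m1 HE); rewrite Hsum.
have Hmc : m * c = 3 * n.
  by rewrite -Hsum (eq_bigr _ (fun a _ => Hc a)) sum_nat_const card_ord.
have Hs : \sum_(a < m) odd a * FE a = m./2 * c.
  by rewrite (eq_bigr (fun a : 'I_m => odd a * c)) -?big_distrl ?sum_odd // => a _; rewrite Hc.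
rewrite Hs in Hodd.
have oE : forall k, odd k = (k %% 2 == 1) by move=> k; rewrite modn2; case: odd.
move: Hmc; rewrite -{1}(even_halfK em) -(even_halfK en) => Hmc.
move: Hodd.
have -> : m./2 * c = 3 * n./2.
  by apply: double_inj; rewrite doubleMl Hmc doubleMr.
rewrite oddM /=.
move: n4; rewrite -{1}(even_halfK en) -!muln2 oE; lia.
Qed.
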